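(* Let $k$ be a field and $\mathcal{R}=\mathrm{RCFM}(k)$. For every finitely presented right $\mathcal{R}$-module $\mathcal{M}$ one has $\operatorname{Ext}^1_{\mathcal{R}}(\mathcal{M},\mathcal{C}^{\oplus d})=0$ for all $d\in\mathbb{N}_0$ and $\operatorname{Ext}^1_{\mathcal{R}}(\mathcal{M},\mathcal{C}_\infty)=0$.
   Context: $\mathcal{R}=\mathrm{RCFM}(k)$ is the $k$-algebra of $\mathbb{N}_0\times\mathbb{N}_0$ row-column-finite matrices. $\mathsf{A}$: $\mathsf{a}_{i+1,i}=1$ ($i\in\mathbb{N}_0$), other entries $0$; $\mathsf{B}$: $\mathsf{b}_{\frac{n(n+1)}{2}+i,\frac{(n-1)n}{2}+i}=1$ ($n>0$, $0\le i<n$), other entries $0$. $\mathcal{C}=\mathcal{R}/(\mathsf{I}-\mathsf{A}^t)\mathcal{R}$, $\mathcal{C}_\infty=\mathcal{R}/(\mathsf{I}-\mathsf{B}^t)\mathcal{R}$. *)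

(* Defs.v *)
From HB Require Import structures.
From mathcomp Require Import all_boot all_order all_algebra.
From Stdlib Require Import ClassicalEpsilon.
Set Implicit Arguments. Unset Strict Implicit. Unset Printing Implicit Defensive.
Import GRing.Theory.
Local Open Scope ring_scope.

Definition mx (k : fieldType) := nat -> nat -> k.

Section RCFM.
Variable k : fieldType.

Definition row_finite (X : mx k) :=
  forall i, exists b : nat, forall j, (b <= j)%N -> X i j = 0.
Definition col_finite (X : mx k) :=
  forall j, exists b : nat, forall i, (b <= i)%N -> X i j = 0.
Definition rcfm (X : mx k) := row_finite X /\ col_finite X.

(* a bound for the support of row i (meaningful when X is row-finite) *)
Definition rbound (X : mx k) (i : nat) : nat :=
  epsilon (inhabits 0%N) (fun b => forall j, (b <= j)%N -> X i j = 0).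

Definition mxmul (X Y : mx k) : mx k :=
  fun i j => \sum_(l < rbound X i) X i l * Y l j.
Definition mxsub (X Y : mx k) : mx k := fun i j => X i j - Y i j.
Definition mxid : mx k := fun i j => if i == j then 1 else 0.
Definition mxtr (X : mx k) : mx k := fun i j => X j i.
Definition mxsum (m : nat) (F : 'I_m -> mx k) : mx k :=
  fun i j => \sum_(t < m) F t i j.
Definition mxeq (X Y : mx k) := forall i j, X i j = Y i j.

Definition matA : mx k := fun i j => if i == j.+1 then 1 else 0.
(* B : b_{n(n+1)/2 + i, (n-1)n/2 + i} = 1 for n > 0, 0 <= i < n *)
Definition matB : mx k := fun r c =>
  if has (fun n => has (fun i => (r == (n * n.+1) %/ 2 + i)%N &&
                                 (c == (n.-1 * n) %/ 2 + i)%N) (iota 0 n))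
         (iota 1 r)
  then 1 else 0.

Definition in_ideal (T X : mx k) :=
  exists Z, rcfm Z /\ mxeq X (mxmul (mxsub mxid T) Z).

(* Elements of (R/(I-T)R)^{(+)d} are represented by d-tuples of elements of R;
   v is zero in the module iff every coordinate lies in (I - T)R. *)
Definition zero_in_quot (T : mx k) (d : nat) (v : 'I_d -> mx k) :=
  forall t, in_ideal T (v t).

(* Let M = coker (R^m --P--> R^n) be the finitely presented right R-module
   presented by the n x m matrix P over R (acting on columns by left
   multiplication).  With a free resolution  ... -> P2 -> R^m -> R^n -> M -> 0
   where P2 maps onto ker P, Hom_R(R^m, N) = N^m and Ext^1(M, N) is the
   cohomology  { 1-cocycles } / { 1-coboundaries }  of Hom_R(-, N).
   [ext1_zero P T d] says Ext^1_R(M, (R/(I-T)R)^{(+)d}) = 0: every cocycle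
   (nu_j)_{j<m} in N^m (i.e. sum_j nu_j r_j = 0 whenever P r = 0) is a
   coboundary (nu_j = sum_i y_i P_ij for some (y_i) in N^n). *)
Definition ext1_zero (n m : nat) (P : 'I_n -> 'I_m -> mx k) (T : mx k) (d : nat) :=
  forall nu : 'I_m -> 'I_d -> mx k,
    (forall j t, rcfm (nu j t)) ->
    (forall r : 'I_m -> mx k,
        (forall j, rcfm (r j)) ->
        (forall i, mxeq (mxsum (fun j => mxmul (P i j) (r j))) (fun _ _ => 0)) ->
        zero_in_quot T (fun t => mxsum (fun j => mxmul (nu j t) (r j)))) ->
    exists y : 'I_n -> 'I_d -> mx k,
      (forall i t, rcfm (y i t)) /\
      forall j, zero_in_quot T
        (fun t => mxsub (nu j t) (mxsum (fun i => mxmul (y i t) (P i j)))).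

End RCFM.

(* Main.v *)
Require Import Defs.
From HB Require Import structures.
From mathcomp Require Import all_boot all_order all_algebra.
From Stdlib Require Import ClassicalEpsilon Classical FunctionalExtensionality PropExtensionality.
From mathcomp Require Import ring zify.
Import Defs.
Set Implicit Arguments. Unset Strict Implicit. Unset Printing Implicit Defensive.
Import GRing.Theory.
Local Open Scope ring_scope.



Section Solver.
Variable k : fieldType.
Variables (E : Type) (a : E -> nat -> k) (cc : E -> k).
Definition lhsL (L : seq (k * E)) u := \sum_(p <- L) p.1 * a p.2 u.
Definition rhsL (L : seq (k * E)) := \sum_(p <- L) p.1 * cc p.2.
Hypothesis Hc : forall L, (forall u, lhsL L u = 0) -> rhsL L = 0.
Definition goodL t L := (forall u, (t < u)%N -> lhsL L u = 0) /\ lhsL L t != 0.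
Definition L0 t := epsilon (inhabits [::]) (goodL t).
Definition stepv t (v : nat -> k) :=
  (rhsL (L0 t) - \sum_(u < t) lhsL (L0 t) u * v u) / lhsL (L0 t) t.
Fixpoint VV t : nat -> k := match t with 0 => fun _ => 0
  | t'.+1 => fun u => if u == t' then stepv t' (VV t') else VV t' u end.

Lemma VVagree t u : (u < t)%N -> VV t u = VV u.+1 u.
Proof.
elim: t => // t IH; rewrite ltnS leq_eqVlt => /orP[/eqP->|ut] //=.
by rewrite (ltn_eqF ut) IH.
Qed.

Lemma lhs_cat L1 L2 u : lhsL (L1 ++ L2) u = lhsL L1 u + lhsL L2 u.
Proof. by rewrite /lhsL big_cat. Qed.
Lemma rhs_cat L1 L2 : rhsL (L1 ++ L2) = rhsL L1 + rhsL L2.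
Proof. by rewrite /rhsL big_cat. Qed.
Lemma lhs_sc (c : k) L u : lhsL [seq (c * p.1, p.2) | p <- L] u = c * lhsL L u.
Proof. by rewrite /lhsL big_map mulr_sumr; apply: eq_bigr => p _ /=; rewrite mulrA. Qed.
Lemma rhs_sc (c : k) L : rhsL [seq (c * p.1, p.2) | p <- L] = c * rhsL L.
Proof. by rewrite /rhsL big_map mulr_sumr; apply: eq_bigr => p _ /=; rewrite mulrA. Qed.

Lemma VVinv t L : (forall u, (t <= u)%N -> lhsL L u = 0) ->
  rhsL L = \sum_(u < t) lhsL L u * VV t u.
Proof.
elim: t L => [|t IH] L HL.
  by rewrite big_ord0; apply: Hc => u; apply: HL.
rewrite big_ord_recr /= eqxx.
under eq_bigr => i _ do rewrite (ltn_eqF (ltn_ord i)).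
have [z|nz] := eqVneq (lhsL L t) 0.
  rewrite z mul0r addr0; apply: IH => u; rewrite leq_eqVlt => /orP[/eqP<-//|]; exact: HL.
have gL : goodL t L by split => // u tu; exact: HL.
have [g1 g2] : goodL t (L0 t) by apply: (epsilon_spec (inhabits [::]) (goodL t)); exists L.
set l0 := L0 t in g1 g2 *.
set lam := lhsL L t / lhsL l0 t.
have Hz : forall u, (t <= u)%N -> lhsL (L ++ [seq (- lam * p.1, p.2) | p <- l0]) u = 0.
  move=> u; rewrite leq_eqVlt => /orP[/eqP<-|tu].
    by rewrite lhs_cat lhs_sc /lam mulNr divfK // subrr.
  by rewrite lhs_cat lhs_sc HL // g1 // mulr0 addr0.
have H := IH _ Hz.
rewrite rhs_cat rhs_sc in H.
rewrite /stepv -/l0.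
have E1 : \sum_(i < t) lhsL (L ++ [seq (- lam * p.1, p.2) | p <- l0]) i * VV t i
  = \sum_(i < t) lhsL L i * VV t i - lam * \sum_(i < t) lhsL l0 i * VV t i.
  rewrite mulr_sumr -sumrB; apply: eq_bigr => i _.
  by rewrite lhs_cat lhs_sc mulrDl mulNr mulrA mulNr.
rewrite E1 in H.
have -> : rhsL L = lam * rhsL l0 + (\sum_(i < t) lhsL L i * VV t i - lam * \sum_(i < t) lhsL l0 i * VV t i).
  by rewrite -H mulNr addrC subrK.
rewrite /lam. field. done.
Qed.

Lemma solver : exists v : nat -> k, forall e b, (forall u, (b <= u)%N -> a e u = 0) ->
  \sum_(u < b) a e u * v u = cc e.
Proof.
exists (fun u => VV u.+1 u) => e b Hb.
have := VVinv (L := [:: (1, e)]) (t := b).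
rewrite /rhsL /lhsL big_cons big_nil mul1r addr0 => ->.
  apply: eq_bigr => i _; rewrite big_cons big_nil mul1r addr0 VVagree //.
by move=> u bu; rewrite big_cons big_nil mul1r addr0 Hb.
Qed.
End Solver.



Section Mx.
Variable k : fieldType.
Implicit Types X Y Z : mx k.

Definition fin (v : nat -> k) := exists b, forall c, (b <= c)%N -> v c = 0.

Definition cbound X c : nat :=
  epsilon (inhabits 0%N) (fun b => forall i, (b <= i)%N -> X i c = 0).

Lemma cboundP X c : (exists b, forall i, (b <= i)%N -> X i c = 0) ->
  forall i, (cbound X c <= i)%N -> X i c = 0.
Proof. move=> H; exact: (epsilon_spec (inhabits 0%N) _ H). Qed.

Lemma rboundP X i : (exists b, forall j, (b <= j)%N -> X i j = 0) ->
  forall j, (rbound X i <= j)%N -> X i j = 0.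
Proof. move=> H; exact: (epsilon_spec (inhabits 0%N) _ H). Qed.

Lemma sumL (f : nat -> k) L1 L2 : (forall l, (L1 <= l)%N -> f l = 0) ->
  (forall l, (L2 <= l)%N -> f l = 0) -> \sum_(l < L1) f l = \sum_(l < L2) f l.
Proof.
wlog le12 : L1 L2 / (L1 <= L2)%N.
  move=> W H1 H2; case: (leqP L1 L2) => h; first exact: W.
  by symmetry; apply: W => //; exact: ltnW.
move=> H1 _; rewrite -!(big_mkord xpredT) (@big_cat_nat _ _ _ L1 0 L2 _ _ (leq0n L1) le12) /=.
rewrite [X in _ + X]big1_seq ?addr0 // => l /andP[_]; rewrite mem_index_iota.
by case/andP => h _; exact: H1.
Qed.

Definition vecmul (w : nat -> k) Y c := \sum_(l < cbound Y c) w l * Y l c.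

Lemma vecmulE w Y c L : (forall l, (L <= l)%N -> Y l c = 0) ->
  vecmul w Y c = \sum_(l < L) w l * Y l c.
Proof.
move=> HL; have HY : exists b, forall i, (b <= i)%N -> Y i c = 0 by exists L.
rewrite /vecmul; apply: (sumL (f := fun l => w l * Y l c)) => l hl.
  by rewrite (cboundP HY) // mulr0.
by rewrite HL // mulr0.
Qed.

Lemma mxmulE X Y i c L : row_finite X -> (forall l, (L <= l)%N -> Y l c = 0) ->
  mxmul X Y i c = \sum_(l < L) X i l * Y l c.
Proof.
move=> RX HL; rewrite /mxmul; apply: (sumL (f := fun l => X i l * Y l c)) => l hl.
  by rewrite (rboundP (RX i)) // mul0r.
by rewrite HL // mulr0.
Qed.

Lemma mxmulR X Y i c L : row_finite X -> (forall l, (L <= l)%N -> X i l = 0) ->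
  mxmul X Y i c = \sum_(l < L) X i l * Y l c.
Proof.
move=> RX HL; rewrite /mxmul; apply: (sumL (f := fun l => X i l * Y l c)) => l hl.
  by rewrite (rboundP (RX i)) // mul0r.
by rewrite HL // mul0r.
Qed.

Lemma colf_sub X Y : col_finite X -> col_finite Y -> col_finite (mxsub X Y).
Proof.
move=> HX HY j; case: (HX j) => a Ha; case: (HY j) => b Hb; exists (maxn a b) => i.
by rewrite geq_max => /andP[ha hb]; rewrite /mxsub Ha // Hb // subr0.
Qed.

Lemma bigmax_bound (m : nat) (F : 'I_m -> nat) (t : 'I_m) j : (\max_(t < m) F t <= j)%N -> (F t <= j)%N.
Proof. by apply: leq_trans; apply: leq_bigmax. Qed.

Lemma colf_sum m (F : 'I_m -> mx k) : (forall t, col_finite (F t)) -> col_finite (mxsum F).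
Proof.
move=> HF j; exists (\max_(t < m) cbound (F t) j) => i hi.
rewrite /mxsum big1 // => t _; apply: (cboundP (HF t j)); exact: bigmax_bound hi.
Qed.

Lemma colf_mul X Y : col_finite X -> col_finite Y -> col_finite (mxmul X Y).
Proof.
move=> HX HY j; exists (\max_(l < cbound Y j) cbound X l) => i hi.
rewrite /mxmul big1 // => l _.
case: (leqP (cbound Y j) l) => hl; first by rewrite (cboundP (HY j)) // mulr0.
by rewrite (cboundP (HX l)) ?mul0r //; exact: (@bigmax_bound _ _ (Ordinal hl) _ hi).
Qed.

Lemma fin_sub v w : fin v -> fin w -> fin (fun c => v c - w c).
Proof.
case=> a Ha [b Hb]; exists (maxn a b) => c; rewrite geq_max => /andP[ha hb].
by rewrite Ha // Hb // subr0.
Qed.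

Lemma fin_sum n (F : 'I_n -> nat -> k) : (forall i, fin (F i)) -> fin (fun c => \sum_(i < n) F i c).
Proof.
move=> HF; pose B i := epsilon (inhabits 0%N) (fun b => forall c, (b <= c)%N -> F i c = 0).
have HB i c : (B i <= c)%N -> F i c = 0 by apply: (epsilon_spec (inhabits 0%N) _ (HF i)).
exists (\max_(i < n) B i) => c hc; rewrite big1 // => i _; apply: HB; exact: bigmax_bound hc.
Qed.

Lemma fin_ext v w : fin v -> (forall c, v c = w c) -> fin w.
Proof. by case=> b Hb E; exists b => c hc; rewrite -E Hb. Qed.

Lemma sum_ord_delta (B : nat) (x0 : nat) (f : nat -> k) : (x0 < B)%N ->
  \sum_(x < B) (if x == x0 :> nat then f x else 0) = f x0.
Proof.
move=> h; rewrite (bigD1 (Ordinal h)) //= eqxx big1 ?addr0 // => i ne.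
by have -> : (nat_of_ord i == x0) = false by apply/negbTE; move: ne; apply: contra => /eqP e; apply/eqP/val_inj.
Qed.

Lemma tel (f : nat -> k) K : \sum_(kk < K) (f kk - f kk.+1) = f 0%N - f K.
Proof. elim: K => [|K IH]; first by rewrite big_ord0 subrr. by rewrite big_ord_recr /= IH addrA subrK. Qed.

Lemma vecmul_ext u u' Y c : (forall l, u l = u' l) -> vecmul u Y c = vecmul u' Y c.
Proof. by move=> E; apply: eq_bigr => l _; rewrite E. Qed.

Lemma fin_vecdiff u u' Y r : row_finite Y -> (forall l, (r <= l)%N -> u l = u' l) ->
  fin (fun c => vecmul u Y c - vecmul u' Y c).
Proof.
move=> RY E; exists (\max_(l < r) rbound Y l) => c hc.
rewrite /vecmul -sumrB big1 // => l _; rewrite -mulrBl.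
case: (ltnP l r) => hl.
  by rewrite (rboundP (RY l)) ?mulr0 //; exact: (@bigmax_bound _ _ (Ordinal hl) _ hc).
by rewrite E // subrr mul0r.
Qed.

Variable s : nat -> nat.
Hypothesis Hs : forall r, (r < s r)%N.

Lemma iter_ge n r : (n + r <= iter n s r)%N.
Proof.
elim: n => //= n IH; rewrite addSn; apply: leq_trans (Hs _); by rewrite ltnS.
Qed.

Definition tau X r c := \sum_(kk < cbound X c) X (iter kk s r) c.

Lemma tauE X r c K : (forall i, (K <= i)%N -> X i c = 0) ->
  tau X r c = \sum_(kk < K) X (iter kk s r) c.
Proof.
move=> HK; have HX : exists b, forall i, (b <= i)%N -> X i c = 0 by exists K.
rewrite /tau; apply: (sumL (f := fun l => X (iter l s r) c)) => l hl.
  by rewrite (cboundP HX) //; apply: leq_trans (iter_ge _ _); apply: leq_trans hl (leq_addr _ _).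
by rewrite HK //; apply: leq_trans (iter_ge _ _); apply: leq_trans hl (leq_addr _ _).
Qed.


Variable T : mx k.
Hypothesis HT : forall r c, T r c = if c == s r then 1 else 0.

Lemma rowf_IT : row_finite (mxsub (mxid k) T).
Proof.
move=> i; exists (s i).+1 => j hj; rewrite /mxsub /mxid HT.
have -> : (i == j) = false by apply/negbTE; rewrite neq_ltn (leq_trans (Hs i)) // ltnW.
by rewrite (gtn_eqF hj) subr0.
Qed.

Lemma IT_mul Z r c : mxmul (mxsub (mxid k) T) Z r c = Z r c - Z (s r) c.
Proof.
rewrite (@mxmulR _ Z r c (s r).+1 rowf_IT); last first.
  move=> l hl; rewrite /mxsub /mxid HT.
  have -> : (r == l) = false by apply/negbTE; rewrite neq_ltn (leq_trans (Hs r)) // ltnW.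
  by rewrite (gtn_eqF hl) subr0.
under eq_bigr => l _ do rewrite /mxsub /mxid HT mulrBl.
rewrite sumrB.
rewrite (eq_bigr (fun l : 'I_(s r).+1 => if nat_of_ord l == r then Z l c else 0)); last first.
  by move=> l _; rewrite eq_sym; case: eqP; rewrite ?mul1r ?mul0r.
rewrite (sum_ord_delta (fun l => Z l c)); last by rewrite ltnS ltnW.
rewrite (eq_bigr (fun l : 'I_(s r).+1 => if nat_of_ord l == s r then Z l c else 0)); last first.
  by move=> l _; case: eqP; rewrite ?mul1r ?mul0r.
by rewrite (sum_ord_delta (fun l => Z l c)).
Qed.

Lemma ideal_tau X : in_ideal T X -> col_finite X -> forall r, fin (tau X r).
Proof.
case=> Z [[RZ CZ] EX] CX r.
case: (RZ r) => b Hb; exists b => c hc.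
case: (CX c) => b1 H1; case: (CZ c) => b2 H2.
rewrite (@tauE _ _ _ (maxn b1 b2)) => [|i]; last by rewrite geq_max => /andP[h _]; exact: H1.
under eq_bigr => kk _ do rewrite EX IT_mul -iterS.
have tel : forall K, \sum_(kk < K) (Z (iter kk s r) c - Z (iter kk.+1 s r) c) = Z r c - Z (iter K s r) c.
  elim=> [|K IH]; first by rewrite big_ord0 subrr.
  by rewrite big_ord_recr /= IH addrA subrK.
rewrite tel Hb // (H2 (iter _ s r)) ?subr0 //.
apply: leq_trans (iter_ge _ _); apply: leq_trans (leq_addr _ _); exact: leq_maxr.
Qed.

Lemma tau_ideal X : col_finite X -> (forall r, fin (tau X r)) -> in_ideal T X.
Proof.
move=> CX FX; exists (tau X); split; first split.
- exact: FX.
- move=> c; case: (CX c) => b Hb; exists b => r hr.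
  rewrite (@tauE _ _ _ b) // big1 // => kk _; apply: Hb.
  apply: leq_trans hr _; apply: leq_trans (iter_ge _ _); exact: leq_addl.
- move=> r c; rewrite IT_mul; case: (CX c) => b Hb.
  rewrite (@tauE _ _ _ b.+1); last by move=> i hi; apply: Hb; exact: ltnW.
  rewrite (@tauE _ _ _ b) // big_ord_recl /=.
  rewrite [in X in _ - X](eq_bigr (fun i : 'I_b => X (s (iter (0 + i) s r)) c)).
    by rewrite addrK.
  by move=> i _; rewrite add0n -iterSr iterS.
Qed.

Lemma tau_sub X Y r c : col_finite X -> col_finite Y ->
  tau (mxsub X Y) r c = tau X r c - tau Y r c.
Proof.
move=> CX CY; case: (CX c) => a Ha; case: (CY c) => b Hb.
have HXY : forall i, (maxn a b <= i)%N -> mxsub X Y i c = 0.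
  by move=> i; rewrite geq_max => /andP[h1 h2]; rewrite /mxsub Ha // Hb // subr0.
rewrite (tauE _ HXY) (@tauE X _ _ (maxn a b)) ?(@tauE Y _ _ (maxn a b)).
- by rewrite -sumrB.
- by move=> i; rewrite geq_max => /andP[_ h]; exact: Hb.
- by move=> i; rewrite geq_max => /andP[h _]; exact: Ha.
Qed.

Lemma tau_sum m (F : 'I_m -> mx k) r c : (forall t, col_finite (F t)) ->
  tau (mxsum F) r c = \sum_(t < m) tau (F t) r c.
Proof.
move=> CF; set K := \max_(t < m) cbound (F t) c.
have HK t : forall i, (K <= i)%N -> F t i c = 0.
  by move=> i hi; apply: (cboundP (CF t c)); exact: bigmax_bound hi.
rewrite (@tauE _ _ _ K); last by move=> i hi; rewrite /mxsum big1 // => t _; exact: HK.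
under [RHS]eq_bigr => t _ do rewrite (@tauE _ _ _ K (HK t)).
by rewrite exchange_big.
Qed.

Lemma tau_mul X Y r c : rcfm X -> col_finite Y ->
  tau (mxmul X Y) r c = vecmul (tau X r) Y c.
Proof.
move=> [RX CX] CY; set L := cbound Y c.
have HL : forall l, (L <= l)%N -> Y l c = 0 by apply: cboundP.
set K := \max_(l < L) cbound X l.
have HK : forall l, (l < L)%N -> forall i, (K <= i)%N -> X i l = 0.
  by move=> l hl i hi; apply: (cboundP (CX l)); exact: (@bigmax_bound _ _ (Ordinal hl) _ hi).
rewrite (@tauE _ _ _ K); last first.
  move=> i hi; rewrite (mxmulE _ RX HL) big1 // => l _; by rewrite HK ?mul0r.
rewrite (vecmulE _ HL).
under eq_bigr => kk _ do rewrite (mxmulE _ RX HL).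
rewrite exchange_big; apply: eq_bigr => l _.
rewrite (@tauE _ _ _ K) ?mulr_suml // => i hi; exact: HK.
Qed.


Lemma tau_step X r c : col_finite X -> tau X r c = X r c + tau X (s r) c.
Proof.
move=> CX; case: (CX c) => b Hb.
rewrite (@tauE _ _ _ b.+1); last by move=> i hi; apply: Hb; exact: ltnW.
rewrite (@tauE _ _ _ b) // big_ord_recl /=.
congr (_ + _); apply: eq_bigr => i _; by rewrite add0n -iterSr iterS.
Qed.

End Mx.



Section Core.
Variable k : fieldType.
Variables (n m : nat) (P : 'I_n -> 'I_m -> mx k) (HP : forall i j, rcfm (P i j)).

Lemma delta2 (B : nat) (j0 : 'I_m) (x0 : nat) (F : 'I_m -> nat -> k) : (x0 < B)%N ->
  \sum_(j < m) \sum_(x < B) (if (j0, x0) == (j, nat_of_ord x) then F j x else 0) = F j0 x0.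
Proof.
move=> hx; rewrite (bigD1 j0) //= [X in _ + X]big1 ?addr0; last first.
  move=> j nj; rewrite big1 // => x _; rewrite xpair_eqE.
  by rewrite eq_sym (negbTE nj).
under eq_bigr => x _ do rewrite xpair_eqE eqxx /= eq_sym.
by rewrite (sum_ord_delta (fun x => F j0 x)).
Qed.

Lemma regroup (L : seq (k * ('I_m * nat))) (B : nat) (G : 'I_m -> nat -> k)
  (g : k * ('I_m * nat) -> k) : (forall p, p \in L -> (p.2.2 < B)%N) ->
  \sum_(j < m) \sum_(x < B) G j x * (\sum_(p <- L | p.2 == (j, nat_of_ord x)) g p)
  = \sum_(p <- L) g p * G p.2.1 p.2.2.
Proof.
elim: L => [|p L IH] HB.
  by rewrite big_nil big1 // => j _; rewrite big1 // => x _; rewrite big_nil mulr0.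
rewrite big_cons -IH; last by move=> q hq; apply: HB; rewrite inE hq orbT.
have hp : (p.2.2 < B)%N by apply: HB; rewrite inE eqxx.
rewrite (eq_bigr (fun j : 'I_m => \sum_(x < B) (if p.2 == (j, nat_of_ord x) then g p * G j x else 0) +
   \sum_(x < B) G j x * (\sum_(q <- L | q.2 == (j, nat_of_ord x)) g q))); last first.
  move=> j _; rewrite -big_split; apply: eq_bigr => x _ /=; rewrite big_cons.
  by case: ifP => _; rewrite ?mulrDr ?add0r // mulrC.
rewrite big_split /=; congr (_ + _).
clear HB IH; case: p hp => c [j0 x0] /= hp.
by rewrite (@delta2 B j0 x0 (fun j x => g (c, (j0, x0)) * G j x) hp).
Qed.

Variable nu : 'I_m -> nat -> k.
Hypothesis H : forall rk : 'I_m -> mx k, (forall j, rcfm (rk j)) ->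
  (forall i, mxeq (mxsum (fun j => mxmul (P i j) (rk j))) (fun _ _ => 0)) ->
  fin (fun c => \sum_(j < m) vecmul (nu j) (rk j) c).

Definition coef N (e : 'I_m * nat) (i : 'I_n) l := if (N <= e.2)%N then P i e.1 l e.2 else 0.
Definition rhsN N (e : 'I_m * nat) := if (N <= e.2)%N then nu e.1 e.2 else 0.

Definition Bad N (L : seq (k * ('I_m * nat))) :=
  (forall i l, \sum_(p <- L) p.1 * coef N p.2 i l = 0) /\ \sum_(p <- L) p.1 * rhsN N p.2 != 0.

Lemma step1 : exists N, forall L : seq (k * ('I_m * nat)),
  (forall i l, \sum_(p <- L) p.1 * coef N p.2 i l = 0) -> \sum_(p <- L) p.1 * rhsN N p.2 = 0.
Proof.
apply: NNPP => Hn.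
have Hall : forall N, exists L, Bad N L.
  move=> N; apply: NNPP => HN; apply: Hn; exists N => L HL; apply: NNPP => Hne.
  by apply: HN; exists L; split => //; apply/eqP.
pose LL N := epsilon (inhabits [::]) (Bad N).
have LLP N : Bad N (LL N) by apply: (epsilon_spec (inhabits [::]) (Bad N) (Hall N)).
pose h t (p : k * ('I_m * nat)) := if (t <= p.2.2)%N then p.1 else 0.
pose rk (j : 'I_m) : mx k := fun x t => \sum_(p <- LL t | p.2 == (j, x)) h t p.
pose Bt t := (\max_(p <- LL t) p.2.2).+1.
have HBt t : forall p, p \in LL t -> (p.2.2 < Bt t)%N.
  by move=> p hp; rewrite ltnS; apply: leq_bigmax_seq.
have colrk j t : forall x, (Bt t <= x)%N -> rk j x t = 0.
  move=> x hx; rewrite /rk big1_seq // => p /andP[/eqP e hp].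
  by have := HBt t p hp; rewrite e /= ltnNge hx.
have rcrk j : rcfm (rk j).
  split.
  - move=> x; exists x.+1 => t ht; rewrite /rk big1 // => p /eqP e.
    by rewrite /h e /= leqNgt ht.
  - by move=> t; exists (Bt t); apply: colrk.
have Hcoef t p i l : p.1 * coef t p.2 i l = h t p * P i p.2.1 l p.2.2.
  by rewrite /coef /h; case: ifP; rewrite ?mulr0 ?mul0r.
have Hrhs t p : p.1 * rhsN t p.2 = h t p * nu p.2.1 p.2.2.
  by rewrite /rhsN /h; case: ifP; rewrite ?mulr0 ?mul0r.
have Hker : forall i, mxeq (mxsum (fun j => mxmul (P i j) (rk j))) (fun _ _ => 0).
  move=> i l t; rewrite /mxsum.
  rewrite (eq_bigr (fun j : 'I_m => \sum_(x < Bt t) P i j l x * rk j x t)); last first.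
    by move=> j _; apply: mxmulE; [case: (HP i j) | apply: colrk].
  rewrite /rk (regroup (fun j x => P i j l x)); last exact: HBt.
  have [H1 _] := LLP t; rewrite -[RHS](H1 i l); apply: eq_bigr => p _; by rewrite Hcoef.
case: (H rcrk Hker) => b Hb.
have := Hb b (leqnn b).
rewrite (eq_bigr (fun j : 'I_m => \sum_(x < Bt b) nu j x * rk j x b)); last first.
  by move=> j _; apply: vecmulE; apply: colrk.
rewrite /rk (regroup (fun j x => nu j x)); last exact: HBt.
have [_ H2] := LLP b; move: H2.
rewrite (eq_bigr (fun p => h b p * nu p.2.1 p.2.2)) => [/eqP //|p _]; exact: Hrhs.
Qed.


Definition code (i : 'I_n) l := (l * n + i)%N.

Lemma code_eq (i i' : 'I_n) l l' : (code i l == code i' l') = (i == i') && (l == l').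
Proof.
apply/idP/idP; last by case/andP => /eqP-> /eqP->.
move/eqP => E; apply/andP.
have n0 : (0 < n)%N by apply: leq_ltn_trans (ltn_ord i).
have Ei : i = i' :> nat.
  by have := congr1 (modn^~ n) E; rewrite /code !modnMDl !modn_small.
split; first by apply/eqP/val_inj.
apply/eqP; have := congr1 (divn^~ n) E; rewrite /code !divnMDl // !divn_small ?addn0 //.
Qed.

Definition Lb x := \max_(i < n) \max_(j < m) cbound (P i j) x.

Lemma LbP i j x l : (Lb x <= l)%N -> P i j l x = 0.
Proof.
move=> h; apply: (cboundP (proj2 (HP i j) x)).
apply: leq_trans h; apply: leq_trans (leq_bigmax i); exact: (leq_bigmax j).
Qed.

Lemma core : exists v : 'I_n -> nat -> k,
  forall j, fin (fun c => nu j c - \sum_(i < n) vecmul (v i) (P i j) c).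
Proof.
case: step1 => N HN.
pose a (e : 'I_m * nat) u := \sum_(i < n) \sum_(l < Lb e.2)
   (if u == code i l then coef N e i l else 0).
have acode e i l : a e (code i l) = coef N e i l.
  rewrite /a (bigD1 i) //= [X in _ + X]big1 ?addr0; last first.
    by move=> i' ni; rewrite big1 // => l' _; rewrite code_eq eq_sym (negbTE ni).
  under eq_bigr => l' _ do rewrite code_eq eqxx /= eq_sym.
  case: (ltnP l (Lb e.2)) => hl; first by rewrite (sum_ord_delta (fun l => coef N e i l)).
  rewrite big1; last by move=> l' /=; case: eqP => // E; move: (ltn_ord l'); rewrite E ltnNge hl.
  by rewrite /coef; case: ifP => // _; rewrite LbP.
have Hcons : forall L : seq (k * ('I_m * nat)), (forall u, lhsL a L u = 0) -> rhsL (rhsN N) L = 0.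
  move=> L HL; apply: HN => i l; rewrite -[RHS](HL (code i l)).
  by apply: eq_bigr => p _; rewrite acode.
have [vs Hvs] := @solver k _ a (rhsN N) Hcons.
  exists (fun i l => vs (code i l)) => j; exists N => c hc.
  have hb : forall u, (Lb c * n <= u)%N -> a (j, c) u = 0.
    move=> u hu; rewrite /a big1 // => i _; rewrite big1 // => l _.
    case: eqP => // E; move: hu; rewrite E /code => hu.
    have : (l * n + i < Lb c * n)%N.
      apply: (@leq_trans (l.+1 * n)); first by rewrite mulSn addnC ltn_add2r.
      by rewrite leq_mul2r ltn_ord orbT.
    by rewrite ltnNge hu.
  have := Hvs (j, c) _ hb; rewrite /rhsN /= hc => <-.
  rewrite /a.
  under eq_bigr => u _ do rewrite mulr_suml.
  rewrite exchange_big /=.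
  rewrite -sumrB big1 // => i _.
  rewrite (@vecmulE _ _ _ c (Lb c)); last by move=> l hl; apply: LbP.
  under eq_bigr => u _ do rewrite mulr_suml.
  rewrite exchange_big -sumrB big1 // => l _.
  rewrite (eq_bigr (fun u : 'I_(Lb c * n) => if nat_of_ord u == code i l then coef N (j, c) i l * vs u else 0)); last first.
    by move=> u _; case: ifP; rewrite ?mul0r.
  rewrite (sum_ord_delta (fun u => coef N (j, c) i l * vs u)).
    by rewrite /coef /= hc mulrC subrr.
  apply: (@leq_trans (l.+1 * n)); first by rewrite /code mulSn addnC ltn_add2r.
  by rewrite leq_mul2r ltn_ord orbT.
Qed.

End Core.



Section Main.
Variable k : fieldType.
Variable s : nat -> nat.
Hypothesis Hs : forall r, (r < s r)%N.
Variable T : mx k.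
Hypothesis HT : forall r c, T r c = if c == s r then 1 else 0.
Variables (n m : nat) (P : 'I_n -> 'I_m -> mx k) (HP : forall i j, rcfm (P i j)).

Lemma fin_add (v w : nat -> k) : fin v -> fin w -> fin (fun c => v c + w c).
Proof.
case=> a Ha [b Hb]; exists (maxn a b) => c; rewrite geq_max => /andP[ha hb].
by rewrite Ha // Hb // addr0.
Qed.

Lemma main_T (nu : 'I_m -> mx k) (Hnu : forall j, rcfm (nu j))
  (Hcoc : forall r : 'I_m -> mx k, (forall j, rcfm (r j)) ->
     (forall i, mxeq (mxsum (fun j => mxmul (P i j) (r j))) (fun _ _ => 0)) ->
     in_ideal T (mxsum (fun j => mxmul (nu j) (r j)))) :
  exists y : 'I_n -> mx k, (forall i, rcfm (y i)) /\
    forall j, in_ideal T (mxsub (nu j) (mxsum (fun i => mxmul (y i) (P i j)))).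
Proof.
pose nr r (j : 'I_m) := fun c => tau s (nu j) r c.
have Hrow r : forall rk : 'I_m -> mx k, (forall j, rcfm (rk j)) ->
    (forall i, mxeq (mxsum (fun j => mxmul (P i j) (rk j))) (fun _ _ => 0)) ->
    fin (fun c => \sum_(j < m) vecmul (nr r j) (rk j) c).
  move=> rk Hr Hk.
  have CX : col_finite (mxsum (fun j => mxmul (nu j) (rk j))).
    by apply: colf_sum => j; apply: colf_mul; [case: (Hnu j) | case: (Hr j)].
  apply: fin_ext (ideal_tau Hs HT (Hcoc rk Hr Hk) CX r) _ => c.
  rewrite (tau_sum Hs); last by move=> j; apply: colf_mul; [case: (Hnu j) | case: (Hr j)].
  by apply: eq_bigr => j _; rewrite (tau_mul Hs) //; case: (Hr j).
pose Sol r (v : 'I_n -> nat -> k) :=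
  forall j, fin (fun c => nr r j c - \sum_(i < n) vecmul (v i) (P i j) c).
have Hex r : exists v, Sol r v by exact: (@core k n m P HP (nr r) (Hrow r)).
pose V r := epsilon (inhabits (fun (_ : 'I_n) (_ : nat) => (0 : k))) (Sol r).
have VP r : Sol r (V r) by apply: (epsilon_spec _ (Sol r) (Hex r)).
have Sol_s r : Sol (s r) = Sol r.
  apply: functional_extensionality => v; apply: propositional_extensionality.
  have Hd : forall j c, nr r j c = nu j r c + nr (s r) j c.
    by move=> j c; rewrite /nr (tau_step Hs) //; case: (Hnu j).
  split => H j.
  - have F1 : fin (nu j r) by case: (Hnu j) => R _; exact: R.
    apply: fin_ext (fin_add F1 (H j)) _ => c /=.
    by rewrite Hd addrA.
  - have F1 : fin (nu j r) by case: (Hnu j) => R _; exact: R.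
    apply: fin_ext (fin_sub (H j) F1) _ => c /=.
    by rewrite Hd addrAC (addrC (nu j r c)) addrK.
have V_s r : V (s r) = V r by rewrite /V Sol_s.
pose w (i : 'I_n) : mx k := fun r c => if (r <= c)%N then V r i c else 0.
pose y (i : 'I_n) : mx k := fun r c => w i r c - w i (s r) c.
have Hy i : rcfm (y i).
  split.
  - move=> r; exists (s r) => c hc; rewrite /y /w hc V_s.
    by rewrite (leq_trans (ltnW (Hs r)) hc) subrr.
  - move=> c; exists c.+1 => r hr; rewrite /y /w.
    rewrite leqNgt hr /= leqNgt (leq_trans hr (ltnW (Hs r))) subrr //.
have tau_y i r c : tau s (y i) r c = w i r c.
  rewrite (@tauE _ _ Hs _ _ _ c.+1); last first.
    move=> r' hr; rewrite /y /w leqNgt hr /= leqNgt (leq_trans hr (ltnW (Hs r'))) subrr //.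
  rewrite (tel (fun kk => w i (iter kk s r) c)) /=.
  have Z : w i (iter c.+1 s r) c = 0.
    rewrite /w ifF //; apply/negbTE; rewrite -ltnNge.
    by apply: leq_trans (iter_ge Hs _ _); rewrite ltnS leq_addr.
  by rewrite Z subr0.
exists y; split => // j.
have CX : col_finite (mxsum (fun i => mxmul (y i) (P i j))).
  by apply: colf_sum => i; apply: colf_mul; [case: (Hy i) | case: (HP i j)].
apply: (tau_ideal Hs HT).
  by apply: colf_sub => //; case: (Hnu j).
move=> r.
have D : fin (fun c => \sum_(i < n) (vecmul (w i r) (P i j) c - vecmul (V r i) (P i j) c)).
  apply: fin_sum => i; apply: (@fin_vecdiff _ _ _ _ r); first by case: (HP i j).
  by move=> l hl; rewrite /w hl.
apply: fin_ext (fin_sub (VP r j) D) _ => c /=.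
rewrite (tau_sub Hs) //; last by case: (Hnu j).
rewrite (tau_sum Hs); last by move=> i; apply: colf_mul; [case: (Hy i) | case: (HP i j)].
rewrite sumrB /nr opprB addrA subrK; congr (_ - _); apply: eq_bigr => i _.
by rewrite (tau_mul Hs) //; [apply: vecmul_ext => l; rewrite tau_y | case: (HP i j)].
Qed.
End Main.



Lemma ext_T (k : fieldType) (s : nat -> nat) (Hs : forall r, (r < s r)%N) (T : mx k)
  (HT : forall r c, T r c = if c == s r then 1 else 0) n m (P : 'I_n -> 'I_m -> mx k)
  (HP : forall i j, rcfm (P i j)) d : ext1_zero P T d.
Proof.
move=> nu Hnu Hcoc.
have H t : exists y : 'I_n -> mx k, (forall i, rcfm (y i)) /\
    forall j, in_ideal T (mxsub (nu j t) (mxsum (fun i => mxmul (y i) (P i j)))).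
  apply: (main_T Hs HT HP (fun j => Hnu j t)) => r Hr Hk; exact: (Hcoc r Hr Hk t).
pose Y t := proj1_sig (constructive_indefinite_description _ (H t)).
have HY t : (forall i, rcfm (Y t i)) /\
    forall j, in_ideal T (mxsub (nu j t) (mxsum (fun i => mxmul (Y t i) (P i j)))).
  exact: (proj2_sig (constructive_indefinite_description _ (H t))).
exists (fun i t => Y t i); split.
  by move=> i t; case: (HY t).
by move=> j t; case: (HY t) => _; apply.
Qed.

Definition tri n := (n * n.+1 %/ 2)%N.

Lemma tri_rec n : tri n.+1 = (tri n + n.+1)%N.
Proof.
rewrite /tri.
have -> : (n.+1 * n.+2 = n.+1 * 2 + n * n.+1)%N by lia.
by rewrite divnMDl // addnC.
Qed.

Lemma tri_mono a b : (a <= b)%N -> (tri a <= tri b)%N.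
Proof.
move=> /subnKC <-; elim: (b - a)%N => [|d IH]; first by rewrite addn0.
by rewrite addnS tri_rec (leq_trans IH) // leq_addr.
Qed.

Lemma tri_pred n : (0 < n)%N -> tri n = (tri n.-1 + n)%N.
Proof. by case: n => // n _; rewrite tri_rec. Qed.

Lemma blk_ex r : exists n, exists i, [/\ (0 < n)%N, (i < n)%N & r = (tri n.-1 + i)%N].
Proof.
elim: r => [|r [n [i [n0 iL E]]]]; first by exists 1%N, 0%N.
case: (ltnP i.+1 n) => h.
  by exists n, i.+1; split => //; rewrite E addnS.
exists n.+1, 0%N; split => //=; rewrite addn0 E.
have -> : i = n.-1 by apply/eqP; rewrite eqn_leq -ltnS prednK // iL -(leq_add2r 1) !addn1 prednK.
by rewrite (tri_pred n0) -addnS prednK.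
Qed.

Lemma blk_uniq n i n' i' : (0 < n)%N -> (i < n)%N -> (0 < n')%N -> (i' < n')%N ->
  (tri n.-1 + i = tri n'.-1 + i')%N -> n = n'.
Proof.
wlog lt : n i n' i' / (n <= n')%N.
  move=> W h1 h2 h3 h4 E; case: (leqP n n') => h; first exact: (W n i n' i' h h1 h2 h3 h4 E).
  by symmetry; exact: (W n' i' n i (ltnW h) h3 h4 h1 h2 (esym E)).
move=> n0 iL n0' iL' E; apply/eqP; rewrite eqn_leq lt /=; apply: contraT; rewrite -ltnNge => nn.
have : (tri n.-1 + i < tri n'.-1 + i')%N.
  apply: (@leq_trans (tri n)).
    by rewrite (tri_pred n0) ltn_add2l.
  apply: leq_trans (leq_addr _ _); apply: tri_mono; rewrite -ltnS prednK //.
by rewrite E ltnn.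
Qed.

Definition blk r := epsilon (inhabits 0%N)
  (fun n => exists i, [/\ (0 < n)%N, (i < n)%N & r = (tri n.-1 + i)%N]).

Lemma blkP r : exists i, [/\ (0 < blk r)%N, (i < blk r)%N & r = (tri (blk r).-1 + i)%N].
Proof. exact: (epsilon_spec (inhabits 0%N) _ (blk_ex r)). Qed.

Definition sB r := (r + blk r)%N.

Lemma sB_gt r : (r < sB r)%N.
Proof. by case: (blkP r) => i [h _ _]; rewrite /sB -addn1 leq_add2l. Qed.

Lemma HTB (k : fieldType) r c : mxtr (matB k) r c = if c == sB r then 1 else 0.
Proof.
rewrite /mxtr /matB; congr (if _ then _ else _).
have tm n : (0 < n)%N -> (n.-1 * n %/ 2)%N = tri n.-1.
  by move=> n0; rewrite /tri prednK.
apply/hasP/eqP.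
- case=> n; rewrite mem_iota => /andP[n1 _] /hasP[i]; rewrite mem_iota add0n => /andP[_ iL].
  case/andP => /eqP Ec /eqP Er.
  case: (blkP r) => i' [b0 bL Er'].
  have n0 : (0 < n)%N by [].
  rewrite tm // in Er.
  have Eb : n = blk r by apply: (blk_uniq n0 iL b0 bL); rewrite -Er.
  by rewrite Ec /sB -Eb Er -/(tri n) (tri_pred n0) addnAC.
- move=> Ec; case: (blkP r) => i [b0 bL Er].
  exists (blk r); first by rewrite mem_iota b0 /= add1n ltnS Ec /sB leq_addl.
  apply/hasP; exists i; first by rewrite mem_iota add0n.
  rewrite tm // -Er eqxx andbT Ec /sB {1}Er -/(tri (blk r)) (tri_pred b0).
  by rewrite addnAC.
Qed.

Lemma HTA (k : fieldType) r c : mxtr (matA k) r c = if c == r.+1 then 1 else 0.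
Proof. by []. Qed.

Theorem corollary7p17 (k : fieldType) (n m : nat)
    (P : 'I_n -> 'I_m -> mx k) (HP : forall i j, rcfm (P i j)) :
  (forall d : nat, ext1_zero P (mxtr (matA k)) d) /\
  ext1_zero P (mxtr (matB k)) 1.
Proof.
split.
  move=> d; apply: (@ext_T k succn) => //; exact: HTA.
by apply: (@ext_T k sB) => //; [exact: sB_gt | exact: HTB].
Qed.
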